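(* Let $R$ be an integral domain and $M=\begin{pmatrix}a&b\\c&d\end{pmatrix}$ a $2\times2$ matrix over $R$. The map $S\colon R^2\to R^2$ given by left multiplication by $M$ on column vectors is a solution of the Yang--Baxter equation on $R$ if and only if $M$ has at least one of the following forms (for some $b,c\in R$): $$\begin{pmatrix}1-bc&b\\c&0\end{pmatrix},\quad \begin{pmatrix}0&b\\c&1-bc\end{pmatrix},\quad \begin{pmatrix}0&b\\c&0\end{pmatrix},\quad \begin{pmatrix}1&0\\0&1\end{pmatrix}.$$
   Context: For a nonempty set $X$, a map $S\colon X^2\to X^2$ is a solution of the Yang--Baxter equation on $X$ if $S_1S_2S_1=S_2S_1S_2$ as maps $X^3\to X^3$, where $S_1=S\times\mathrm{Id}$ and $S_2=\mathrm{Id}\times S$. *)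

(* Defs.v *)
From mathcomp Require Import all_boot all_algebra.
Set Implicit Arguments. Unset Strict Implicit. Unset Printing Implicit Defensive.
Import GRing.Theory.
Local Open Scope ring_scope.

Definition S1 (X : Type) (S : X * X -> X * X) (t : X * X * X) : X * X * X :=
  let: (x, y, z) := t in let: (x', y') := S (x, y) in (x', y', z).
Definition S2 (X : Type) (S : X * X -> X * X) (t : X * X * X) : X * X * X :=
  let: (x, y, z) := t in let: (y', z') := S (y, z) in (x, y', z').
Definition is_YBE_solution (X : Type) (S : X * X -> X * X) : Prop :=
  forall t : X * X * X, S1 S (S2 S (S1 S t)) = S2 S (S1 S (S2 S t)).

Definition col2 (R : nzRingType) (x y : R) : 'cV[R]_2 :=
  \col_(i < 2) (if i == ord0 then x else y).
Definition mx_map (R : nzRingType) (M : 'M[R]_2) (v : R * R) : R * R :=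
  let w := M *m col2 v.1 v.2 in (w ord0 ord0, w (@Ordinal 2 1 isT) ord0).

Definition mx2 (R : nzRingType) (a b c d : R) : 'M[R]_2 :=
  \matrix_(i < 2, j < 2)
    (if i == ord0 then (if j == ord0 then a else b)
     else (if j == ord0 then c else d)).

(* Main.v *)
Require Import Defs.
From mathcomp Require Import all_boot all_algebra.
From mathcomp Require Import ring.
Local Open Scope ring_scope.
Import GRing.Theory.
Arguments mx_map : simpl never.
Arguments S1 : simpl never.
Arguments S2 : simpl never.

Lemma mx_mapE (R : idomainType) (M : 'M[R]_2) (v : R * R) :
  mx_map M v = (M ord0 ord0 * v.1 + M ord0 (@Ordinal 2 1 isT) * v.2,
                M (@Ordinal 2 1 isT) ord0 * v.1 + M (@Ordinal 2 1 isT) (@Ordinal 2 1 isT) * v.2).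
Proof.
rewrite /mx_map !mxE !big_ord_recl !big_ord0 !mxE /= !addr0.
by have -> : lift ord0 ord0 = @Ordinal 2 1 isT by apply: val_inj.
Qed.

Lemma S1E (R : idomainType) (M : 'M[R]_2) x y z :
  S1 (mx_map M) (x, y, z) = (M ord0 ord0 * x + M ord0 (@Ordinal 2 1 isT) * y,
                M (@Ordinal 2 1 isT) ord0 * x + M (@Ordinal 2 1 isT) (@Ordinal 2 1 isT) * y, z).
Proof. by rewrite /S1 mx_mapE. Qed.

Lemma S2E (R : idomainType) (M : 'M[R]_2) x y z :
  S2 (mx_map M) (x, y, z) = (x, M ord0 ord0 * y + M ord0 (@Ordinal 2 1 isT) * z,
                M (@Ordinal 2 1 isT) ord0 * y + M (@Ordinal 2 1 isT) (@Ordinal 2 1 isT) * z).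
Proof. by rewrite /S2 mx_mapE. Qed.

Lemma LHSE (R : idomainType) (M : 'M[R]_2) x y z :
  let a := M ord0 ord0 in let b := M ord0 (@Ordinal 2 1 isT) in
  let c := M (@Ordinal 2 1 isT) ord0 in let d := M (@Ordinal 2 1 isT) (@Ordinal 2 1 isT) in
  S1 (mx_map M) (S2 (mx_map M) (S1 (mx_map M) (x, y, z))) =
  (a * (a * x + b * y) + b * (a * (c * x + d * y) + b * z),
   c * (a * x + b * y) + d * (a * (c * x + d * y) + b * z),
   c * (c * x + d * y) + d * z).
Proof.
move=> a b c d; rewrite /S1 /S2 /mx_map /a /b /c /d /= !mxE !big_ord_recl !big_ord0 !mxE /=.
have L : lift ord0 ord0 = @Ordinal 2 1 isT by apply: val_inj.
rewrite !L; congr (_, _, _); ring.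
Qed.

Lemma RHSE (R : idomainType) (M : 'M[R]_2) x y z :
  let a := M ord0 ord0 in let b := M ord0 (@Ordinal 2 1 isT) in
  let c := M (@Ordinal 2 1 isT) ord0 in let d := M (@Ordinal 2 1 isT) (@Ordinal 2 1 isT) in
  S2 (mx_map M) (S1 (mx_map M) (S2 (mx_map M) (x, y, z))) =
  (a * x + b * (a * y + b * z),
   a * (c * x + d * (a * y + b * z)) + b * (c * y + d * z),
   c * (c * x + d * (a * y + b * z)) + d * (c * y + d * z)).
Proof.
move=> a b c d; rewrite /S1 /S2 /mx_map /a /b /c /d /= !mxE !big_ord_recl !big_ord0 !mxE /=.
have L : lift ord0 ord0 = @Ordinal 2 1 isT by apply: val_inj.
rewrite !L; congr (_, _, _); ring.
Qed.

Lemma mx2_eq (R : idomainType) (M : 'M[R]_2) a b c d :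
  M ord0 ord0 = a -> M ord0 (@Ordinal 2 1 isT) = b ->
  M (@Ordinal 2 1 isT) ord0 = c -> M (@Ordinal 2 1 isT) (@Ordinal 2 1 isT) = d ->
  M = mx2 a b c d.
Proof.
move=> ha hb hc hd; apply/matrixP => i j; rewrite !mxE.
case: i => [[|[|i]] Hi] //; case: j => [[|[|j]] Hj] //=.
- by rewrite -ha; congr (M _ _); apply: val_inj.
- by rewrite -hb; congr (M _ _); apply: val_inj.
- by rewrite -hc; congr (M _ _); apply: val_inj.
- by rewrite -hd; congr (M _ _); apply: val_inj.
Qed.

Lemma mx2E (R : idomainType) a b c d :
  let M := mx2 a b c d in
  [/\ M ord0 ord0 = a, M ord0 (@Ordinal 2 1 isT) = b,
      M (@Ordinal 2 1 isT) ord0 = c & M (@Ordinal 2 1 isT) (@Ordinal 2 1 isT) = (d : R)].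
Proof. by rewrite /= !mxE. Qed.

Lemma eq0_sub (R : idomainType) (x y : R) : x = y -> x - y = 0.
Proof. by move=> ->; rewrite subrr. Qed.

Definition eqs {R : idomainType} (a b c d : R) : Prop :=
  [/\ a * (a + b * c - 1) = 0, a * b * d = 0, a * c * d = 0,
      a * d * (d - a) = 0 & d * (d + b * c - 1) = 0].

Lemma eqs_poly (R : idomainType) (a b c d : R) :
  eqs a b c d <->
  forall x y z : R,
  (a * (a * x + b * y) + b * (a * (c * x + d * y) + b * z),
   c * (a * x + b * y) + d * (a * (c * x + d * y) + b * z),
   c * (c * x + d * y) + d * z) =
  (a * x + b * (a * y + b * z),
   a * (c * x + d * (a * y + b * z)) + b * (c * y + d * z),
   c * (c * x + d * (a * y + b * z)) + d * (c * y + d * z)).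
Proof.
split.
- case=> e1 e2 e3 e4 e5 x y z.
  congr (_, _, _); apply/eqP; rewrite -subr_eq0; apply/eqP.
  + transitivity (a * (a + b * c - 1) * x + a * b * d * y); first ring.
    by rewrite e1 e2; ring.
  + transitivity (a * c * d * x + a * d * (d - a) * y - a * b * d * z); first ring.
    by rewrite e3 e4 e2; ring.
  + transitivity (- (a * c * d * y) - (d * (d + b * c - 1) * z)); first ring.
    by rewrite e3 e5; ring.
- move=> H.
  have H1 := H 1 0 0; have H2 := H 0 1 0; have H3 := H 0 0 1.
  case: H1 => /eq0_sub e11 /eq0_sub e12 /eq0_sub e13.
  case: H2 => /eq0_sub e21 /eq0_sub e22 /eq0_sub e23.
  case: H3 => /eq0_sub e31 /eq0_sub e32 /eq0_sub e33.
  split.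
  + by rewrite -e11; ring.
  + by rewrite -e21; ring.
  + by rewrite -e12; ring.
  + rewrite -e22; ring.
  + apply/eqP; rewrite -oppr_eq0; apply/eqP; rewrite -e33; ring.
Qed.

Lemma classify (R : idomainType) (a b c d : R) :
  eqs a b c d <->
  [\/ a = 1 - b * c /\ d = 0, a = 0 /\ d = 1 - b * c, a = 0 /\ d = 0 |
      [/\ a = 1, b = 0, c = 0 & d = 1]].
Proof.
split.
- case=> e1 e2 e3 e4 e5.
  have [a0|an0] := eqVneq a 0.
  + move: e5; move/eqP; rewrite mulf_eq0 => /orP [/eqP d0|/eqP h].
    * by constructor 3.
    * constructor 2; split=> //.
      by move/eqP: h; rewrite subr_eq0 => /eqP <-; rewrite addrK.
  + have ea : a = 1 - b * c.
      move/eqP: e1; rewrite mulf_eq0 (negbTE an0) /= subr_eq0 => /eqP <-.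
      by rewrite addrK.
    move/eqP: e4; rewrite !mulf_eq0 (negbTE an0) /= => /orP [/eqP d0|].
      by constructor 1.
    rewrite subr_eq0 => /eqP da.
    have dn0 : d != 0 by rewrite da.
    move/eqP: e2; rewrite !mulf_eq0 (negbTE an0) (negbTE dn0) /= orbF => /eqP b0.
    move/eqP: e3; rewrite !mulf_eq0 (negbTE an0) (negbTE dn0) /= orbF => /eqP c0.
    have a1 : a = 1 by rewrite ea b0 mul0r subr0.
    constructor 4; split=> //; by rewrite da.
- case=> [[-> ->]|[-> ->]|[-> ->]|[-> -> -> ->]]; split; ring.
Qed.

Theorem theorem5p10 (R : idomainType) (M : 'M[R]_2) :
  is_YBE_solution (mx_map M) <->
  exists b c : R,
    M = mx2 (1 - b * c) b c 0 \/
    M = mx2 0 b c (1 - b * c) \/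
    M = mx2 0 b c 0 \/
    M = mx2 1 0 0 1.
Proof.
have YBE : is_YBE_solution (mx_map M) <->
  forall x y z : R,
  S1 (mx_map M) (S2 (mx_map M) (S1 (mx_map M) (x, y, z))) =
  S2 (mx_map M) (S1 (mx_map M) (S2 (mx_map M) (x, y, z))).
  by split=> H; [move=> x y z; apply: H | case=> [[x y] z]; apply: H].
rewrite YBE; clear YBE.
have -> : (forall x y z : R,
  S1 (mx_map M) (S2 (mx_map M) (S1 (mx_map M) (x, y, z))) =
  S2 (mx_map M) (S1 (mx_map M) (S2 (mx_map M) (x, y, z)))) <->
  eqs (M ord0 ord0) (M ord0 (@Ordinal 2 1 isT)) (M (@Ordinal 2 1 isT) ord0)
      (M (@Ordinal 2 1 isT) (@Ordinal 2 1 isT)).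
  rewrite eqs_poly; split=> H x y z; have := H x y z; by rewrite LHSE RHSE.
rewrite classify; split.
- case=> [[ea ed]|[ea ed]|[ea ed]|[ea eb ec ed]].
  + exists (M ord0 (@Ordinal 2 1 isT)), (M (@Ordinal 2 1 isT) ord0); left.
    by apply: mx2_eq.
  + exists (M ord0 (@Ordinal 2 1 isT)), (M (@Ordinal 2 1 isT) ord0); right; left.
    by apply: mx2_eq.
  + exists (M ord0 (@Ordinal 2 1 isT)), (M (@Ordinal 2 1 isT) ord0); right; right; left.
    by apply: mx2_eq.
  + exists 0, 0; right; right; right.
    by apply: mx2_eq.
- case=> b [c [->|[->|[->| ->]]]]; rewrite !mxE /=.
  + by constructor 1.
  + by constructor 2.
  + by constructor 3.
  + by constructor 4.
Qed.
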